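(* Let $N_t\ge 1$, let $\mathbf{g}_1,\mathbf{g}_2,\mathbf{h}_c\in\mathbb{C}^{N_t}$, let $t_1,t_2>0$, $\sigma^2>0$, $P_{\max}>0$ and $\bar R_{\min}\ge 0$, and set $\bar\gamma_{\min}=2^{\bar R_{\min}}-1$. Consider the sum-of-ratios problem $$(\mathrm{P1}):\quad \min_{\mathbf{w}\in\mathbb{C}^{N_t}}\ f(\mathbf{w})=\frac{t_1}{|\mathbf{g}_1^{\mathrm H}\mathbf{w}|^2}+\frac{t_2}{|\mathbf{g}_2^{\mathrm H}\mathbf{w}|^2}\quad\text{s.t.}\quad \log_2\!\Big(1+\frac{|\mathbf{h}_c^{\mathrm H}\mathbf{w}|^2}{\sigma^2}\Big)\ge \bar R_{\min},\qquad \mathbf{w}^{\mathrm H}\mathbf{w}\le P_{\max},$$ and the problem $$(\mathrm{P2}):\quad \min_{\mathbf{w}\in\mathbb{C}^{N_t},\ \tilde{\mathbf{y}}=(\tilde y_1,\tilde y_2)\in\mathbb{R}^2}\ \tilde F(\mathbf{w},\tilde{\mathbf{y}})=\sum_{i=1}^{2}\frac{1}{\big[\,2\tilde y_i\sqrt{|\mathbf{g}_i^{\mathrm H}\mathbf{w}|^2}-\tilde y_i^{2}\,t_i\,\big]_+}\quad\text{s.t.}\quad \mathbf{h}_c^{\mathrm H}\mathbf{w}\ge\sqrt{\sigma^2\bar\gamma_{\min}},\qquad \mathbf{w}^{\mathrm H}\mathbf{w}\le P_{\max},$$ where the constraint $\mathbf{h}_c^{\mathrm H}\mathbf{w}\ge\sqrt{\sigma^2\bar\gamma_{\min}}$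 means that $\mathbf{h}_c^{\mathrm H}\mathbf{w}$ is a real number at least $\sqrt{\sigma^2\bar\gamma_{\min}}$. Then (P1) and (P2) are equivalent: they have the same optimal value.
   Context: $[x]_+=\max\{x,0\}$, with the convention $1/[x]_+=+\infty$ when $x\le 0$, and likewise $t_i/0=+\infty$ in $f$. $(\cdot)^{\mathrm H}$ denotes conjugate transpose. In the paper's application, $\mathbf{g}_1$ is the projected sensing vector $\mathbf{h}_s$, $\mathbf{g}_2$ is the projected distance vector $\tilde{\boldsymbol{\alpha}}_{\rho_s}$, $t_i=[\tilde{\mathbf{T}}]_{(i,i)}$ are diagonal entries of a coordinate-transformation weight matrix, $\mathbf{h}_c$ is the communication channel, $\mathbf{w}$ is the beamformer and $\tilde{\mathbf{y}}$ are auxiliary variables; these interpretations are not needed for the statement. *)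

(* Defs.v *)
From HB Require Import structures.
From mathcomp Require Import all_boot all_order all_algebra.
From mathcomp Require Import all_classical all_reals all_analysis.
From mathcomp Require Import complex.
Set Implicit Arguments. Unset Strict Implicit. Unset Printing Implicit Defensive.
Import Order.TTheory GRing.Theory Num.Theory.
Local Open Scope ring_scope.

Section Defs.
Variable R : realType.

Definition hdot (n : nat) (g w : 'cV[R[i]]_n) : R[i] :=
  \sum_(k < n) (g k 0)^* * w k 0.

Definition cabs2 (z : R[i]) : R := complex.Re z ^+ 2 + complex.Im z ^+ 2.

Definition eratio (t a : R) : \bar R :=
  if a == 0 then +oo%E else (t / a)%:E.

(* 1 / [x]_+ with the convention 1 / [x]_+ = +oo when x <= 0 *)
Definition inv_pos (x : R) : \bar R :=
  if 0 < x then (1 / x)%:E else +oo%E.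

Definition f_P1 (n : nat) (g1 g2 : 'cV[R[i]]_n) (t1 t2 : R) (w : 'cV[R[i]]_n)
  : \bar R :=
  (eratio t1 (cabs2 (hdot g1 w)) + eratio t2 (cabs2 (hdot g2 w)))%E.

Definition feasible_P1 (n : nat) (hc : 'cV[R[i]]_n) (sigma2 Pmax Rmin : R)
  (w : 'cV[R[i]]_n) : Prop :=
  ln (1 + cabs2 (hdot hc w) / sigma2) / ln 2 >= Rmin /\
  complex.Re (hdot w w) <= Pmax.

Definition F_P2 (n : nat) (g1 g2 : 'cV[R[i]]_n) (t1 t2 : R) (w : 'cV[R[i]]_n)
  (y : R * R) : \bar R :=
  (inv_pos (2 * y.1 * Num.sqrt (cabs2 (hdot g1 w)) - y.1 ^+ 2 * t1) +
   inv_pos (2 * y.2 * Num.sqrt (cabs2 (hdot g2 w)) - y.2 ^+ 2 * t2))%E.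

Definition feasible_P2 (n : nat) (hc : 'cV[R[i]]_n) (sigma2 Pmax Rmin : R)
  (w : 'cV[R[i]]_n) : Prop :=
  complex.Im (hdot hc w) = 0 /\
  complex.Re (hdot hc w) >= Num.sqrt (sigma2 * (2 `^ Rmin - 1)) /\
  complex.Re (hdot w w) <= Pmax.

(* optimal values (infima in the extended reals; +oo if infeasible) *)
Definition optval_P1 (n : nat) (g1 g2 hc : 'cV[R[i]]_n) (t1 t2 sigma2 Pmax Rmin : R)
  : \bar R :=
  ereal_inf [set f_P1 g1 g2 t1 t2 w | w in feasible_P1 hc sigma2 Pmax Rmin].

Definition optval_P2 (n : nat) (g1 g2 hc : 'cV[R[i]]_n) (t1 t2 sigma2 Pmax Rmin : R)
  : \bar R :=
  ereal_inf [set v | exists w y, feasible_P2 hc sigma2 Pmax Rmin w /\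
                                  v = F_P2 g1 g2 t1 t2 w y].
End Defs.

(* Main.v *)
Require Import Defs.
From HB Require Import structures.
From mathcomp Require Import all_boot all_order all_algebra.
From mathcomp Require Import all_classical all_reals all_analysis.
From mathcomp Require Import complex.
From mathcomp Require Import ring lra.
Import Order.TTheory GRing.Theory Num.Theory.
Local Open Scope ring_scope.

Set Implicit Arguments.
Section Aux.
Variable R : realType.

Lemma mulC_def (a b c d : R) :
  Complex a b * Complex c d = Complex (a*c - b*d) (a*d + b*c).
Proof. by []. Qed.

Lemma conjC_def (a b : R) : (Complex a b)^* = Complex a (- b).
Proof. by []. Qed.

Lemma cabs2_ge0 (z : R[i]) : 0 <= cabs2 z.
Proof. rewrite /cabs2; case: z => a b /=; nra. Qed.

Lemma cabs2M (x y : R[i]) : cabs2 (x * y) = cabs2 x * cabs2 y.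
Proof. case: x => a b; case: y => c d; rewrite mulC_def /cabs2 /=; ring. Qed.

Lemma hdotZ n (g w : 'cV[R[i]]_n) c : hdot g (c *: w) = c * hdot g w.
Proof.
rewrite /hdot mulr_sumr; apply: eq_bigr => k _; rewrite mxE; ring.
Qed.

Lemma hdotZZ n (w : 'cV[R[i]]_n) c :
  hdot (c *: w) (c *: w) = c^* * c * hdot w w.
Proof.
rewrite /hdot mulr_sumr; apply: eq_bigr => k _; rewrite !mxE rmorphM; ring.
Qed.

Lemma phase (z : R[i]) : exists c : R[i],
  c^* * c = 1 /\ cabs2 c = 1 /\ complex.Im (c * z) = 0 /\
  complex.Re (c * z) = Num.sqrt (cabs2 z).
Proof.
case: z => a b; rewrite /cabs2 /=.
have [r0|rpos] := leP (Num.sqrt (a ^+ 2 + b ^+ 2)) 0.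
  have r0' : Num.sqrt (a ^+ 2 + b ^+ 2) = 0.
    by apply/le_anti; rewrite r0 sqrtr_ge0.
  have : a ^+ 2 + b ^+ 2 <= 0 by rewrite -sqrtr_eq0 r0'.
  move=> h; have ha : a = 0 by nra.
  have hb : b = 0 by nra.
  exists (Complex 1 0); rewrite r0' conjC_def !mulC_def /cabs2 /= ha hb.
  split; first by have -> : (1 : R[i]) = Complex 1 0 by []; congr Complex; ring.
  by (repeat split); ring.
set r := Num.sqrt _ in rpos *.
have hr2 : r ^+ 2 = a ^+ 2 + b ^+ 2 by rewrite sqr_sqrtr //; nra.
have rne : r != 0 by rewrite gt_eqF.
have huv : (a / r) ^+ 2 + (b / r) ^+ 2 = 1.
  have -> : (a / r) ^+ 2 + (b / r) ^+ 2 = (a ^+ 2 + b ^+ 2) / r ^+ 2 by field.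
  by rewrite -hr2 divff // expf_neq0.
exists (Complex (a / r) (- (b / r))).
rewrite conjC_def !mulC_def /cabs2 /=.
split.
  have -> : (1 : R[i]) = Complex 1 0 by [].
  congr Complex; last by ring.
  rewrite -huv; ring.
split; first by rewrite -huv; ring.
split; first by field.
have -> : a / r * a - - (b / r) * b = (a ^+ 2 + b ^+ 2) / r by field.
by rewrite -hr2; field.
Qed.


Lemma inv_pos_ge (c t y : R) : 0 <= c -> 0 < t ->
  (eratio t c <= inv_pos (2 * y * Num.sqrt c - y ^+ 2 * t))%E.
Proof.
move=> c0 t0; rewrite /inv_pos.
set a := Num.sqrt c.
have ha2 : a ^+ 2 = c by rewrite sqr_sqrtr.
have ha0 : 0 <= a by apply: sqrtr_ge0.
case: ifPn => [xpos|_]; last exact: leey.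
rewrite /eratio.
have cne : c != 0.
  apply/eqP => c00; move: xpos; rewrite -ha2 in c00.
  have a00 : a = 0 by nra.
  rewrite a00; nra.
rewrite ifF; last by apply/negbTE.
rewrite lee_fin.
have cpos : 0 < c by rewrite lt_def cne c0.
set x := _ - _ in xpos *.
have hx : t * x <= c by rewrite /x -ha2; have := sqr_ge0 (a - t * y); nra.
rewrite ler_pdivrMr // mulrC mulrA ler_pdivlMr //; lra.
Qed.

Lemma inv_pos_eq (c t : R) : 0 <= c -> 0 < t ->
  inv_pos (2 * (Num.sqrt c / t) * Num.sqrt c - (Num.sqrt c / t) ^+ 2 * t)
  = eratio t c.
Proof.
move=> c0 t0; rewrite /inv_pos /eratio.
set a := Num.sqrt c.
have ha2 : a ^+ 2 = c by rewrite sqr_sqrtr.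
have tne : t != 0 by rewrite gt_eqF.
have -> : 2 * (a / t) * a - (a / t) ^+ 2 * t = a ^+ 2 / t by field.
rewrite ha2.
case: eqP => [->|/eqP cne]; first by rewrite mul0r ltxx.
have cpos : 0 < c by rewrite lt_def cne c0.
rewrite ifT ?divr_gt0 //; congr (_%:E); field.
by rewrite cne tne.
Qed.

Lemma feasP1 n (hc w : 'cV[R[i]]_n) (s P Rm : R) : 0 < s ->
  feasible_P1 hc s P Rm w <->
  s * (2 `^ Rm - 1) <= cabs2 (hdot hc w) /\ complex.Re (hdot w w) <= P.
Proof.
move=> s0; rewrite /feasible_P1.
set x := cabs2 _.
have x0 : 0 <= x by apply: cabs2_ge0.
have v0 : 0 < 1 + x / s by have := divr_ge0 x0 (ltW s0); lra.
have l2 : 0 < ln (2 : R) by apply: ln_gt0; lra.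
have E : 2 `^ Rm = expR (Rm * ln (2 : R)) by rewrite /powR gt_eqF //; lra.
have key : (Rm <= ln (1 + x / s) / ln 2) = (s * (2 `^ Rm - 1) <= x).
  rewrite ler_pdivlMr // E.
  have -> : (Rm * ln 2 <= ln (1 + x / s)) = (expR (Rm * ln 2) <= 1 + x / s).
    rewrite -[in RHS]ler_ln ?expRK // posrE ?expR_gt0 //.
  set e := expR _.
  have hxs : x = s * (x / s) by field; rewrite gt_eqF.
  apply/idP/idP => h; nra.
by rewrite key.
Qed.

Lemma feasP2 n (hc w : 'cV[R[i]]_n) (s P Rm : R) :
  feasible_P2 hc s P Rm w ->
  s * (2 `^ Rm - 1) <= cabs2 (hdot hc w) /\ complex.Re (hdot w w) <= P.
Proof.
move=> [him [hre hP]]; split => //.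
rewrite /cabs2 him.
set q := s * _ in hre *.
have [q0|q0] := leP q 0; first by nra.
have := sqr_sqrtr (ltW q0).
have := sqrtr_ge0 q; nra.
Qed.
End Aux.
Unset Implicit Arguments.

Theorem proposition3 (R : realType) (Nt : nat) (hNt : (1 <= Nt)%N)
  (g1 g2 hc : 'cV[R[i]]_Nt) (t1 t2 sigma2 Pmax Rmin : R)
  (ht1 : 0 < t1) (ht2 : 0 < t2) (hsigma2 : 0 < sigma2) (hPmax : 0 < Pmax)
  (hRmin : 0 <= Rmin) :
  optval_P1 g1 g2 hc t1 t2 sigma2 Pmax Rmin =
  optval_P2 g1 g2 hc t1 t2 sigma2 Pmax Rmin.
Proof.
have Fge : forall w y, (f_P1 g1 g2 t1 t2 w <= F_P2 g1 g2 t1 t2 w y)%E.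
  by move=> w y; rewrite /f_P1 /F_P2; apply: leeD; apply: inv_pos_ge;
    rewrite ?cabs2_ge0.
have Feq : forall w, exists y, F_P2 g1 g2 t1 t2 w y = f_P1 g1 g2 t1 t2 w.
  move=> w; exists (Num.sqrt (cabs2 (hdot g1 w)) / t1,
                    Num.sqrt (cabs2 (hdot g2 w)) / t2).
  by rewrite /F_P2 /f_P1 /= !inv_pos_eq ?cabs2_ge0.
rewrite /optval_P1 /optval_P2; apply/le_anti/andP; split.
  apply/ereal_infP => v [w [y [Hw ->]]].
  apply: le_trans (Fge w y).
  apply: ge_ereal_inf; exists (f_P1 g1 g2 t1 t2 w) => //.
  by exists w => //; apply/feasP1 => //; apply: feasP2 Hw.
apply/ereal_infP => v [w Hw <-].
have [c [hcc [hc1 [him hre]]]] := @phase R (hdot hc w).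
have [y hy] := Feq (c *: w).
apply: ge_ereal_inf; exists (F_P2 g1 g2 t1 t2 (c *: w) y).
  exists (c *: w), y; split => //.
  have [H1 H2] := proj1 (@feasP1 R _ _ _ _ _ _ hsigma2) Hw.
  rewrite /feasible_P2 hdotZZ !hdotZ hcc mul1r; split => //; split => //.
  by rewrite hre ler_wsqrtr.
by rewrite hy /f_P1 !hdotZ !cabs2M hc1 !mul1r.
Qed.
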